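(* Let $\mathcal{A}$ be a finite-dimensional unital associative algebra over a field $\mathrm{k}$. Then $\mathcal{A}$ has only finitely many subalgebras if and only if $\mathcal{A}$ has only finitely many subalgebras generated by one element (i.e. of the form $\mathrm{k}[y]$, $y\in\mathcal{A}$).
   Context: Subalgebras are unital (contain $1$). *)

(* Defs.v *)
From HB Require Import structures.
From mathcomp Require Import all_boot all_order all_algebra all_field.
Set Implicit Arguments. Unset Strict Implicit. Unset Printing Implicit Defensive.
Import GRing.Theory.
Local Open Scope ring_scope.

Definition unital_subalg (K : fieldType) (A : falgType K) (U : {vspace A}) : bool :=
  (1 \in U) && (U * U <= U)%VS.

(* k[y] : the subalgebra generated by y, i.e. agenv (1 + <[y]>) *)
Definition kgen (K : fieldType) (A : falgType K) (y : A) : {vspace A} :=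
  <<1%VS; y>>%VS.

Definition finitely_many_subalgebras (K : fieldType) (A : falgType K) : Prop :=
  exists s : seq {vspace A}, forall U : {vspace A}, unital_subalg U -> U \in s.

Definition finitely_many_monogenic_subalgebras (K : fieldType) (A : falgType K) : Prop :=
  exists s : seq {vspace A}, forall y : A, kgen y \in s.

(* Main.v *)
Require Import Defs.
From mathcomp Require Import all_boot all_order all_algebra all_field.
Import GRing.Theory.
Local Open Scope ring_scope.

Lemma kgen_sub (K : fieldType) (A : falgType K) (U : {vspace A}) (u : A) :
  unital_subalg U -> u \in U -> (kgen u <= U)%VS.
Proof.
case/andP=> U1 UU Uu; rewrite /kgen.
have H1 : (1%VS <= U)%VS by rewrite -memvE.
have Hs : (1 + <[u]> <= U)%VS by rewrite subv_add H1 -memvE.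
apply: agenv_sub_modl => //.
exact: subv_trans (prodvSl _ Hs) UU.
Qed.

Lemma kgen_unital (K : fieldType) (A : falgType K) (y : A) : unital_subalg (kgen y).
Proof.
rewrite /unital_subalg /kgen agenvM subvv andbT.
by rewrite memvE sub1_agenv.
Qed.

Lemma sumv_seq_sup (K : fieldType) (A : falgType K) (s : seq {vspace A}) (P : pred {vspace A}) V :
  V \in s -> P V -> (V <= \sum_(W <- s | P W) W)%VS.
Proof.
elim: s => [|x s IH] //=; rewrite inE big_cons.
case/orP=> [/eqP<- ->|Vs PV]; first exact: addvSl.
case: (P x); last exact: IH.
exact: subv_trans (IH Vs PV) (addvSr _ _).
Qed.

Lemma sumv_seq_le (K : fieldType) (A : falgType K) (s : seq {vspace A}) (P : pred {vspace A}) U :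
  (forall V, P V -> (V <= U)%VS) -> (\sum_(W <- s | P W) W <= U)%VS.
Proof.
move=> H; elim: s => [|x s IH]; first by rewrite big_nil sub0v.
rewrite big_cons; case Px: (P x) => //.
by rewrite subv_add H.
Qed.

Theorem lemma3p9 (K : fieldType) (A : falgType K) :
  finitely_many_subalgebras A <-> finitely_many_monogenic_subalgebras A.
Proof.
split.
  case=> s Hs; exists s => y; apply: Hs; exact: kgen_unital.
case=> s Hs.
exists [seq (\sum_(V <- mask (val m) s) V)%VS | m : (size s).-tuple bool].
move=> U HU.
have szm : size (map (fun V : {vspace A} => (V <= U)%VS) s) == size s by rewrite size_map.
apply/mapP; exists (Tuple szm); first by rewrite mem_enum.
rewrite /= -filter_mask; apply/eqP; rewrite eqEsubv; apply/andP; split.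
  apply/subvP=> u Uu.
  have Hk : (kgen u <= \sum_(V <- [seq V <- s | (V <= U)%VS]) V)%VS.
    rewrite big_filter; apply: sumv_seq_sup => //.
    exact: kgen_sub.
  apply: (subvP Hk); rewrite /kgen; apply: (subvP (sub_agenv _)).
  by rewrite memvE addvSr.
rewrite big_filter; exact: sumv_seq_le.
Qed.
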